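(* Let $n\ge5$, let $\Delta$ be a non-singular $(d-1)$-complex on $[n-1]$ with $1\le d\le n-4$, and let $\Delta'$ be any complex on $[n-1]$ (of any dimension). Then $D_\Delta=D_{\Delta'}$ in $\operatorname{Pic}(\overline{\mathcal M}_{0,n})$ if and only if $\Delta'=\Delta$.
   Context: $\operatorname{Pic}(\overline{\mathcal M}_{0,n})=\mathbb ZH\oplus\bigoplus_I\mathbb ZE_I$ (sum over $I\subseteq[n-1]$, $1\le|I|\le n-4$) via a fixed Kapranov blow-up presentation $\overline{\mathcal M}_{0,n}\cong\operatorname{Bl}\mathbb P^{n-3}$; $H$ is the hyperplane class and $E_I$ the exceptional divisors. A $k$-simplex on $[n-1]$ is a multiset of cardinality $k+1$ with entries in $[n-1]$, a $k$-complex is a finite set of distinct $k$-simplices; a simplex is singular if some entry has multiplicity $\ge2$, and a complex is non-singular if none of its simplices is singular. For a $k$-complex $\Delta$ put $D_\Delta=(k+1)H-\sum_I\big(k+1-\max_{\sigma\in\Delta}\sum_{i\in I}\operatorname{mult}_i(\sigma)\big)E_I$, where $\operatorname{mult}_i(\sigma)$ is the multiplicity of $i$ in $\sigma$. *)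

(* Defs.v *)
From HB Require Import structures.
From mathcomp Require Import all_boot all_order all_algebra.
Set Implicit Arguments. Unset Strict Implicit. Unset Printing Implicit Defensive.
Import GRing.Theory Num.Theory.

(* Labels: the set [n-1] = {1,...,n-1} is encoded as 'I_(n-1) (label j+1 <-> j). *)

Definition multiset (n : nat) := {ffun 'I_(n.-1) -> nat}.

Definition mcard n (s : multiset n) : nat := \sum_(i : 'I_(n.-1)) s i.

Definition is_simplex n (k : nat) (s : multiset n) : bool := mcard s == k.+1.

(* A k-complex is a pair (k, S): its dimension k and a finite set of distinct
   k-simplices S, given as a list whose membership is the set (so two
   complexes (k,S), (k',S') are equal iff k = k' and S =i S'). *)
Definition is_complex n (k : nat) (S : seq (multiset n)) : bool :=
  all (is_simplex k) S.

Definition singular n (s : multiset n) : bool := [exists i, 1 < s i].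

Definition nonsingular n (S : seq (multiset n)) : bool :=
  all (fun s => ~~ singular s) S.

(* Pic(M_{0,n}) = Z H (+) (+)_I Z E_I,  I subset of [n-1], 1 <= |I| <= n-4.
   An element is encoded by its H-coefficient and its family of E_I-coefficients;
   coefficients at indices I outside the range are forced to be 0, so Leibniz
   equality of encodings is equality in Pic. *)
Definition pic (n : nat) := (int * {ffun {set 'I_(n.-1)} -> int})%type.

Definition Ebasis n (I : {set 'I_(n.-1)}) : bool := (1 <= #|I| <= n - 4)%N.

Definition D_Delta n (k : nat) (S : seq (multiset n)) : pic n :=
  (Posz k.+1,
   [ffun I : {set 'I_(n.-1)} =>
      if Ebasis I then
        (- (Posz k.+1 - Posz (\max_(s <- S) \sum_(i in I) s i)))%R
      else 0%R]).
Arguments D_Delta n k S : clear implicits.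

(* Main.v *)
Require Import Defs.
From HB Require Import structures.
From mathcomp Require Import all_boot all_order all_algebra.
From mathcomp Require Import zify.
Set Implicit Arguments. Unset Strict Implicit.

Section Aux.
Variable n : nat.
Implicit Types (s t : multiset n) (S : seq (multiset n)).

Definition fm S (I : {set 'I_(n.-1)}) := \max_(s <- S) \sum_(i in I) s i.

Lemma fm_attained S I : 0 < fm S I -> exists2 t, t \in S & \sum_(i in I) t i = fm S I.
Proof.
rewrite /fm; elim: S => [|x S IH]; first by rewrite big_nil.
rewrite big_cons => H.
case: (leqP (\sum_(i in I) x i) (\max_(s <- S) \sum_(i in I) s i)) => Hle.
  have Hm : maxn (\sum_(i in I) x i) (\max_(s <- S) \sum_(i in I) s i) = \max_(s <- S) \sum_(i in I) s i by apply/maxn_idPr.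
  rewrite Hm in H *. have [t tS Ht] := IH H. by exists t; rewrite // inE tS orbT.
exists x; first by rewrite inE eqxx.
by [].
Qed.

Definition supp s : {set 'I_(n.-1)} := [set i | 0 < s i].

Definition zo s := forall i, s i <= 1.

Lemma zo_sum_supp s : zo s -> \sum_(i in supp s) s i = #|supp s|.
Proof.
move=> Hz; rewrite -sum1_card; apply: eq_bigr => i; rewrite inE => H.
by have := Hz i; lia.
Qed.

Lemma sum_supp s : \sum_(i in supp s) s i = mcard s.
Proof.
rewrite /mcard [RHS](bigID (fun i => i \in supp s)) /=.
rewrite [X in _ = _ + X]big1 ?addn0; first by apply: eq_bigl => i.
by move=> i; rewrite inE /= -leqNgt leqn0 => /eqP.
Qed.

Lemma zo_eq s t d : zo s -> zo t -> mcard s = d -> mcard t = d ->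
  \sum_(i in supp s) t i = d -> t = s.
Proof.
move=> Hs Ht Es Et Ed.
have out : forall i, i \notin supp s -> t i = 0.
  have : \sum_(i | i \notin supp s) t i == 0.
    have := Et; rewrite /mcard (bigID (fun i => i \in supp s)) /=.
    have -> : \sum_(i | true && (i \in supp s)) t i = \sum_(i in supp s) t i by apply: eq_bigl.
    by rewrite Ed => E; rewrite -(eqn_add2l d) addn0 E.
  rewrite sum_nat_eq0 => /forallP H i Hi; exact/eqP/(implyP (H i) Hi).
have le : forall i, t i <= s i.
  move=> i; case: (boolP (i \in supp s)) => Hi.
    by move: Hi; rewrite inE; have := Ht i; lia.
  by rewrite out.
have : \sum_i (s i - t i) == 0.
  have E : \sum_i s i = \sum_i t i + \sum_i (s i - t i).
    rewrite -big_split /=; apply: eq_bigr => i _; rewrite subnKC //.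
  by rewrite /mcard in Es Et; rewrite Es Et in E; rewrite -(eqn_add2l d) addn0 -E.
rewrite sum_nat_eq0 => /forallP H; apply/ffunP => i.
have /= /eqP := H i; have := le i; lia.
Qed.

End Aux.

Theorem mainTheorem3 (n d : nat) (S : seq (multiset n)) (k' : nat) (S' : seq (multiset n)) :
  (5 <= n)%N -> (1 <= d)%N -> (d <= n - 4)%N ->
  is_complex d.-1 S -> nonsingular S ->
  is_complex k' S' ->
  D_Delta n d.-1 S = D_Delta n k' S' <-> (k' = d.-1 /\ S' =i S).
Proof.
move=> n5 d1 dn cS nS cS'; split; last first.
  move=> [-> eqS]; rewrite /D_Delta; congr (_, _); apply/ffunP => I; rewrite !ffunE.
  by rewrite (eq_big_idem _ _ maxnn eqS).
rewrite /D_Delta => [[Ek Ef]].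
have Hk : k' = d.-1 by rewrite Ek.
subst k'; split => //.
have Hf : forall I, Ebasis I -> fm S I = fm S' I.
  move=> I HI; have := congr1 (fun f : {ffun _ -> int} => f I) Ef.
  rewrite /= !ffunE HI /fm => E.
  have E2 : Posz (\max_(s <- S) \sum_(i in I) s i) = Posz (\max_(s <- S') \sum_(i in I) s i).
    by move: E => /GRing.oppr_inj /GRing.addrI /GRing.oppr_inj.
  by case: E2.
have dd : d.-1.+1 = d by lia.
have Hsimp : forall s, s \in S -> zo s /\ mcard s = d.
  move=> s sS; split.
    move=> i; have := allP nS s sS; rewrite /singular negb_exists => /forallP /(_ i); lia.
  by have := allP cS s sS; rewrite /is_simplex dd => /eqP.
have Hsimp' : forall s, s \in S' -> zo s /\ mcard s = d.
  move=> s sS; split; last by have := allP cS' s sS; rewrite /is_simplex dd => /eqP.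
  move=> i.
  have Eb : Ebasis [set i] by rewrite /Ebasis cards1; lia.
  have Hle : fm S' [set i] <= 1.
    rewrite -Hf //; apply/bigmax_leqP_seq => t tS _.
    rewrite big_set1; exact: (proj1 (Hsimp t tS)).
  have := leq_bigmax_seq (F:=fun t : multiset n => \sum_(j in [set i]) t j) _ sS isT.
  rewrite big_set1 => H; exact: leq_trans H Hle.
have incl : forall (A B : seq (multiset n)),
    (forall s, s \in A -> zo s /\ mcard s = d) ->
    (forall s, s \in B -> zo s /\ mcard s = d) ->
    (forall I, Ebasis I -> fm A I = fm B I) ->
    forall s, s \in A -> s \in B.
  move=> A B HA HB HAB s sA.
  have [zs ms] := HA s sA.
  have cs : #|supp s| = d by rewrite -zo_sum_supp // sum_supp.
  have Eb : Ebasis (supp s) by rewrite /Ebasis cs; lia.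
  have Hm : fm A (supp s) = d.
    apply/eqP; rewrite eqn_leq; apply/andP; split.
      apply/bigmax_leqP_seq => t tA _.
      have [_ mt] := HA t tA; rewrite -mt /mcard.
      by rewrite big_mkcond /=; apply: leq_sum => i _; case: (_ \in _).
    by rewrite /fm; have := leq_bigmax_seq (F:=fun t : multiset n => \sum_(i in supp s) t i) _ sA isT; rewrite sum_supp ms.
  rewrite HAB // in Hm.
  have [t tB Ht] := fm_attained (n:=n) (S:=B) (I:=supp s) (ltac:(rewrite Hm; lia)).
  have [zt mt] := HB t tB.
  have -> : s = t; last by [].
  symmetry; apply: (zo_eq zs zt ms mt); by rewrite Ht Hm.
move=> s; apply/idP/idP.
  apply: incl => // I HI; exact/esym/Hf.
by apply: incl.
Qed.
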